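(* Let $\mathbf C$ be an admissible category of coframes. Then $\mathbf{Adh}$ is a coreflective subcategory of $(\mathbf C^{\mathrm{adh}})^{op}$: the functor $\mathbb P:\mathbf{Adh}\to(\mathbf C^{\mathrm{adh}})^{op}$, $(X,\nu)\mapsto(\mathbb P(X),\nu)$, $f\mapsto f^{-1}$, has a right adjoint $\mathrm{pt}$ and the unit of this adjunction is an isomorphism.
   Context: A category of coframes has coframes as objects and coframe morphisms (preserving arbitrary infima and finite suprema); it is admissible if every powerset $\mathbb P(X)$ is an object and there are classes of index sets $\mathcal I,\mathcal J$ with morphisms exactly the monotone maps preserving existing $I$-indexed infima ($I\in\mathcal I$) and $J$-indexed suprema ($J\in\mathcal J$). Each coframe morphism $\varphi$ has a left adjoint $\varphi_!$. $\mathcal C_L$ is the set of complemented elements of $L$. An adherence structure on a coframe $L$ is a monotone map $\nu:L\to L$ preserving finite suprema of complemented elements and satisfying $\nu(\ell)=\bigwedge\{\nu(a):a\in\mathcal C_L,\ a\ge\ell\}$. An adherence $\mathbf C$-object is a $\mathbf C$-object with an adherence structure $\nu_L$; $\mathbf C^{\mathrm{adh}}$ has as morphisms the $\mathbf C$-morphisms $\varphi:L\to L'$ with $\nu_{L'}(\ell')\le\varphi(\nu_L(\varphi_!(\ell')))$ for all $\ell'\in L'$. An adherence space is a set $X$ with a Čech closure operator $\nu:\mathbb P(X)\to\mathbb P(X)$, i.e. $A\subseteq\nu(A)$ and $\nu$ preserves finite unions; $\mathbf{Adh}$ has as morphisms the maps $f$ with $f(\nu_X(A))\subseteq\nu_Y(f(A))$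 for all $A\subseteq X$. (The right adjoint sends an adherence $\mathbf C$-object $L$ to the set of join-prime elements $x$ of $L$ with $x\le\nu_L(x)$, equipped with the Čech closure $S\mapsto\{x: x\le\nu_L(\bigvee S)\}$.) *)

(* Defs.v *)
From Stdlib Require Import FunctionalExtensionality PropExtensionality Classical.

Unset Implicit Arguments.
Unset Strict Implicit.

Record coframe := Coframe {
  car :> Type;
  le : car -> car -> Prop;
  le_refl : forall x, le x x;
  le_trans : forall x y z, le x y -> le y z -> le x z;
  le_antisym : forall x y, le x y -> le y x -> x = y;
  inf : (car -> Prop) -> car;
  inf_lb : forall S x, S x -> le (inf S) x;
  inf_glb : forall S y, (forall x, S x -> le y x) -> le y (inf S);
  sup : (car -> Prop) -> car;
  sup_ub : forall S x, S x -> le x (sup S);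
  sup_lub : forall S y, (forall x, S x -> le x y) -> le (sup S) y;
  codistr : forall a S,
    sup (fun x => x = a \/ x = inf S)
    = inf (fun y => exists s, S s /\ y = sup (fun x => x = a \/ x = s))
}.

Arguments le {c}.
Arguments inf {c}.
Arguments sup {c}.

Definition join {L : coframe} (a b : L) : L := sup (fun x => x = a \/ x = b).
Definition meet {L : coframe} (a b : L) : L := inf (fun x => x = a \/ x = b).
Definition bot (L : coframe) : L := sup (fun _ => False).
Definition top (L : coframe) : L := inf (fun _ => False).

Definition infF {L : coframe} {I : Type} (f : I -> L) : L :=
  inf (fun x => exists i, x = f i).
Definition supF {L : coframe} {I : Type} (f : I -> L) : L :=
  sup (fun x => exists i, x = f i).

Definition complemented {L : coframe} (a : L) : Prop :=
  exists b : L, meet a b = bot L /\ join a b = top L.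

Definition monotone {L L' : coframe} (phi : L -> L') : Prop :=
  forall x y, le x y -> le (phi x) (phi y).

Definition coframe_mor {L L' : coframe} (phi : L -> L') : Prop :=
  (forall S : L -> Prop,
      phi (inf S) = inf (fun y => exists x, S x /\ y = phi x)) /\
  phi (bot L) = bot L' /\
  (forall a b, phi (join a b) = join (phi a) (phi b)).

(** The left adjoint phi_! of a coframe morphism phi. *)
Definition lower_adj {L L' : coframe} (phi : L -> L') (l' : L') : L :=
  inf (fun l => le l' (phi l)).

Section Powerset.
Variable X : Type.

Let pset := X -> Prop.
Let ple (A B : pset) : Prop := forall x, A x -> B x.
Let pinf (S : pset -> Prop) : pset := fun x => forall A, S A -> A x.
Let psup (S : pset -> Prop) : pset := fun x => exists A, S A /\ A x.

Let pext (A B : pset) : (forall x, A x <-> B x) -> A = B.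
Proof.
  intro H; apply functional_extensionality; intro x;
  apply propositional_extensionality; apply H.
Qed.

Let ple_refl : forall A, ple A A. Proof. intros A x H; exact H. Qed.
Let ple_trans : forall A B C, ple A B -> ple B C -> ple A C.
Proof. intros A B C H1 H2 x H; apply H2, H1, H. Qed.
Let ple_antisym : forall A B, ple A B -> ple B A -> A = B.
Proof. intros A B H1 H2; apply pext; intro x; split; [apply H1|apply H2]. Qed.
Let pinf_lb : forall S A, S A -> ple (pinf S) A.
Proof. intros S A HA x Hx; apply Hx, HA. Qed.
Let pinf_glb : forall S B, (forall A, S A -> ple B A) -> ple B (pinf S).
Proof. intros S B H x Hx A HA; apply (H A HA x Hx). Qed.
Let psup_ub : forall S A, S A -> ple A (psup S).
Proof. intros S A HA x Hx; exists A; split; assumption. Qed.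
Let psup_lub : forall S B, (forall A, S A -> ple A B) -> ple (psup S) B.
Proof. intros S B H x [A [HA Hx]]; apply (H A HA x Hx). Qed.

Let pcodistr : forall a S,
    psup (fun x => x = a \/ x = pinf S)
    = pinf (fun y => exists s, S s /\ y = psup (fun x => x = a \/ x = s)).
Proof.
  intros a S; apply pext; intro x; split.
  - intros [A [[-> | ->] Hx]] B [s [Hs ->]].
    + exists a; split; [left; reflexivity | exact Hx].
    + exists s; split; [right; reflexivity | apply Hx, Hs].
  - intro H.
    destruct (classic (a x)) as [Ha | Ha].
    + exists a; split; [left; reflexivity | exact Ha].
    + exists (pinf S); split; [right; reflexivity |].
      intros s Hs.
      destruct (H _ (ex_intro _ s (conj Hs eq_refl))) as [B [[-> | ->] HB]].
      * contradiction.
      * exact HB.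
Qed.

Definition powerset : coframe :=
  @Coframe pset ple ple_refl ple_trans ple_antisym
    pinf pinf_lb pinf_glb psup psup_ub psup_lub pcodistr.

End Powerset.

(** A category of coframes is given by its class of objects [Obj]; it is
    admissible w.r.t. classes of index sets [Iset], [Jset] when every powerset
    is an object and the morphisms are exactly the monotone maps preserving
    I-indexed infima (I in Iset) and J-indexed suprema (J in Jset); these
    morphisms are required to be coframe morphisms. *)
Definition Cmor (Iset Jset : Type -> Prop) {L L' : coframe} (phi : L -> L')
  : Prop :=
  monotone phi /\
  (forall I : Type, Iset I -> forall f : I -> L,
      phi (infF f) = infF (fun i => phi (f i))) /\
  (forall J : Type, Jset J -> forall f : J -> L,
      phi (supF f) = supF (fun j => phi (f j))).

Definition admissible (Iset Jset : Type -> Prop) (Obj : coframe -> Prop)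
  : Prop :=
  (forall X : Type, Obj (powerset X)) /\
  (forall (L L' : coframe) (phi : L -> L'),
      Obj L -> Obj L' -> Cmor Iset Jset phi -> coframe_mor phi).

Definition adherence_structure (L : coframe) (nu : L -> L) : Prop :=
  monotone nu /\
  nu (bot L) = bot L /\
  (forall a b, complemented a -> complemented b ->
      nu (join a b) = join (nu a) (nu b)) /\
  (forall l, nu l = inf (fun y => exists a, complemented a /\ le l a /\ y = nu a)).

Definition adhC_obj (Obj : coframe -> Prop) (L : coframe) (nu : L -> L) : Prop :=
  Obj L /\ adherence_structure L nu.

Definition Cadh_mor (Iset Jset : Type -> Prop)
  {L : coframe} (nuL : L -> L) {L' : coframe} (nuL' : L' -> L')
  (phi : L -> L') : Prop :=
  Cmor Iset Jset phi /\
  (forall l' : L', le (nuL' l') (phi (nuL (lower_adj phi l')))).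

(** * Adherence spaces: sets with a Cech closure operator. *)
Record adh_space := AdhSpace {
  pts : Type;
  cl : (pts -> Prop) -> (pts -> Prop);
  cl_extensive : forall (A : pts -> Prop) x, A x -> cl A x;
  cl_empty : forall x, ~ cl (fun _ => False) x;
  cl_union : forall (A B : pts -> Prop) x,
      cl (fun y => A y \/ B y) x <-> (cl A x \/ cl B x)
}.

Definition image {X Y : Type} (f : X -> Y) (A : X -> Prop) : Y -> Prop :=
  fun y => exists x, A x /\ y = f x.

Definition preimage {X Y : Type} (f : X -> Y) (B : Y -> Prop) : X -> Prop :=
  fun x => B (f x).

Definition adh_mor (X Y : adh_space) (f : pts X -> pts Y) : Prop :=
  forall (A : pts X -> Prop) x, cl X A x -> cl Y (image f A) (f x).

Definition adh_iso (X Y : adh_space) (f : pts X -> pts Y) : Prop :=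
  adh_mor X Y f /\
  exists g : pts Y -> pts X, adh_mor Y X g /\
    (forall x, g (f x) = x) /\ (forall y, f (g y) = y).

(* Main.v *)
Require Import Defs.
From Stdlib Require Import FunctionalExtensionality PropExtensionality Classical ProofIrrelevance ClassicalEpsilon.

Ltac pext := apply functional_extensionality; intro; apply propositional_extensionality.

Lemma pow_inf X (S : powerset X -> Prop) : inf S = (fun z => forall A, S A -> A z).
Proof. reflexivity. Qed.
Lemma pow_le X (A B : powerset X) : le A B = (forall z, A z -> B z).
Proof. reflexivity. Qed.
Lemma pow_infF X I (h : I -> powerset X) : infF h = (fun z => forall i, h i z).
Proof. pext. cbn. split.
 - intros H i. apply H. exists i. reflexivity.
 - intros H A [i ->]. apply H. Qed.
Lemma pow_supF X I (h : I -> powerset X) : supF h = (fun z => exists i, h i z).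
Proof. pext. cbn. split.
 - intros [A [[i ->] H]]. exists i; exact H.
 - intros [i H]. exists (h i). split; [exists i; reflexivity| exact H]. Qed.
Lemma pow_join X (a b : powerset X) : join a b = (fun z => a z \/ b z).
Proof. pext. cbn. split.
 - intros [A [[-> | ->] H]]; auto.
 - intros [H|H]; [exists a | exists b]; auto. Qed.
Lemma pow_meet X (a b : powerset X) : meet a b = (fun z => a z /\ b z).
Proof. pext. cbn. split.
 - intros H; split; apply H; auto.
 - intros [H1 H2] A [-> | ->]; auto. Qed.
Lemma pow_bot X : bot (powerset X) = (fun _ => False).
Proof. pext. cbn. split. intros [A [[] _]]. intros []. Qed.
Lemma pow_top X : top (powerset X) = (fun _ => True).
Proof. pext. cbn. split. auto. intros _ A []. Qed.

Lemma join_l (L : coframe) (a b : L) : le a (join a b).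
Proof. apply sup_ub; left; reflexivity. Qed.
Lemma join_r (L : coframe) (a b : L) : le b (join a b).
Proof. apply sup_ub; right; reflexivity. Qed.
Lemma join_lub (L : coframe) (a b c : L) : le a c -> le b c -> le (join a b) c.
Proof. intros. apply sup_lub. intros x [-> | ->]; auto. Qed.
Lemma meet_l (L : coframe) (a b : L) : le (meet a b) a.
Proof. apply inf_lb; left; reflexivity. Qed.
Lemma meet_r (L : coframe) (a b : L) : le (meet a b) b.
Proof. apply inf_lb; right; reflexivity. Qed.
Lemma meet_glb (L : coframe) (a b c : L) : le c a -> le c b -> le c (meet a b).
Proof. intros. apply inf_glb. intros x [-> | ->]; auto. Qed.
Lemma join_comm (L : coframe) (a b : L) : join a b = join b a.
Proof. apply le_antisym; apply join_lub; (apply join_l || apply join_r). Qed.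
Lemma bot_le (L : coframe) (x : L) : le (bot L) x.
Proof. apply sup_lub. intros _ []. Qed.
Lemma le_top (L : coframe) (x : L) : le x (top L).
Proof. apply inf_glb. intros _ []. Qed.
Lemma inf_anti (L : coframe) (S T : L -> Prop) :
  (forall x, S x -> T x) -> le (inf T) (inf S).
Proof. intros H. apply inf_glb. intros x Hx. apply inf_lb, H, Hx. Qed.
Lemma codistr_le (L : coframe) (a : L) S y :
  (forall s, S s -> le y (join a s)) -> le y (join a (inf S)).
Proof. intros H. unfold join. rewrite codistr. apply inf_glb.
  intros x [s [Hs ->]]. apply H, Hs. Qed.

Lemma absorb_compl (L : coframe) (a a' b y : L) :
  meet a a' = bot L -> le y (join b a) -> le y a' -> le y b.
Proof.
  intros Hm H1 H2.
  assert (H : le y (join b (meet a a'))).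
  { unfold meet. apply codistr_le. intros s [-> | ->]; auto.
    eapply le_trans; [exact H2| apply join_r]. }
  rewrite Hm in H. eapply le_trans; [exact H|].
  apply join_lub; [apply le_refl | apply bot_le].
Qed.

Lemma compl_join (L : coframe) (a b : L) :
  complemented a -> complemented b -> complemented (join a b).
Proof.
  intros [a' [Ha1 Ha2]] [b' [Hb1 Hb2]]. exists (meet a' b'). split.
  - apply le_antisym; [| apply bot_le].
    set (x := meet (join a b) (meet a' b')).
    assert (Hx1 : le x (join a b)) by apply meet_l.
    assert (Hx2 : le x a') by (eapply le_trans; [apply meet_r| apply meet_l]).
    assert (Hx3 : le x b') by (eapply le_trans; [apply meet_r| apply meet_r]).
    assert (Hxb : le x b).
    { apply (absorb_compl L a a' b x Ha1); auto. rewrite join_comm; auto. }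
    rewrite <- Hb1. apply meet_glb; auto.
  - apply le_antisym; [apply le_top |].
    unfold meet. apply codistr_le. intros s [-> | ->].
    + rewrite <- Ha2. apply join_lub.
      * eapply le_trans; [apply join_l | apply join_l].
      * apply join_r.
    + rewrite <- Hb2. apply join_lub.
      * eapply le_trans; [apply join_r | apply join_l].
      * apply join_r.
Qed.

Lemma nu_join (L : coframe) (nu : L -> L) (H : adherence_structure L nu) (l m : L) :
  nu (join l m) = join (nu l) (nu m).
Proof.
  destruct H as [Hmon [Hbot [Hj Hinf]]]. apply le_antisym.
  2:{ apply join_lub; apply Hmon; (apply join_l || apply join_r). }
  rewrite (Hinf l), (Hinf m).
  apply codistr_le. intros s [b [Hb [Hmb ->]]].
  rewrite (join_comm _ (inf _) (nu b)).
  apply codistr_le. intros s [a [Ha [Hla ->]]].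
  rewrite (join_comm _ (nu b) (nu a)), <- Hj by assumption.
  rewrite (Hinf (join l m)). apply inf_lb. exists (join a b). split; [apply compl_join; auto|].
  split; [|reflexivity]. apply join_lub.
  - eapply le_trans; [exact Hla| apply join_l].
  - eapply le_trans; [exact Hmb| apply join_r].
Qed.

Definition is_pt (Iset Jset : Type -> Prop) (Obj : coframe -> Prop) (L : coframe)
  (nu : L -> L) (p : L -> powerset unit) : Prop :=
  adhC_obj Obj L nu /\ Cmor Iset Jset p /\ p (nu (inf (fun l => p l tt))) tt.

Definition ptT (Iset Jset : Type -> Prop) (Obj : coframe -> Prop) (L : coframe) (nu : L -> L) := {p : L -> powerset unit | is_pt Iset Jset Obj L nu p}.

Definition ptcl Iset Jset Obj (L : coframe) (nu : L -> L)
  (S : ptT Iset Jset Obj L nu -> Prop) : ptT Iset Jset Obj L nu -> Prop :=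
  fun q => proj1_sig q (nu (inf (fun l => forall q', S q' -> proj1_sig q' l tt))) tt.

Lemma pt_cfm Iset Jset Obj (Hadm : admissible Iset Jset Obj) (L : coframe) (nu : L -> L)
  (q : ptT Iset Jset Obj L nu) : coframe_mor (proj1_sig q).
Proof.
  destruct q as [p Hp]. simpl. destruct Hp as [[HO _] [Hc _]].
  apply (proj2 Hadm); auto. apply (proj1 Hadm).
Qed.

Lemma pt_mono Iset Jset Obj (L : coframe) (nu : L -> L) (q : ptT Iset Jset Obj L nu) (l m : L) :
  le l m -> proj1_sig q l tt -> proj1_sig q m tt.
Proof. destruct q as [p Hp]. simpl. destruct Hp as [_ [[Hm _] _]]. intros H. apply (Hm _ _ H). Qed.

Lemma pt_inf Iset Jset Obj (Hadm : admissible Iset Jset Obj) (L : coframe) (nu : L -> L)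
  (q : ptT Iset Jset Obj L nu) (S : L -> Prop) :
  proj1_sig q (inf S) tt <-> forall l, S l -> proj1_sig q l tt.
Proof.
  destruct (pt_cfm _ _ _ Hadm _ _ q) as [Hi _]. rewrite Hi. cbn. split.
  - intros H l Hl. apply H. exists l; auto.
  - intros H A [x [Hx ->]]. auto.
Qed.

Lemma pt_join Iset Jset Obj (Hadm : admissible Iset Jset Obj) (L : coframe) (nu : L -> L)
  (q : ptT Iset Jset Obj L nu) (a b : L) :
  proj1_sig q (join a b) tt <-> proj1_sig q a tt \/ proj1_sig q b tt.
Proof.
  destruct (pt_cfm _ _ _ Hadm _ _ q) as [_ [_ Hj]]. rewrite Hj, pow_join. tauto.
Qed.

Lemma pt_bot Iset Jset Obj (Hadm : admissible Iset Jset Obj) (L : coframe) (nu : L -> L)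
  (q : ptT Iset Jset Obj L nu) : ~ proj1_sig q (bot L) tt.
Proof.
  destruct (pt_cfm _ _ _ Hadm _ _ q) as [_ [Hb _]]. rewrite Hb, pow_bot. auto.
Qed.

Lemma pt_adh Iset Jset Obj (L : coframe) (nu : L -> L) (q : ptT Iset Jset Obj L nu) : adherence_structure L nu.
Proof. destruct q as [p Hp]. destruct Hp as [[_ H] _]. exact H. Qed.

Lemma ptcl_ext Iset Jset Obj (L : coframe) (nu : L -> L) (S : ptT Iset Jset Obj L nu -> Prop) q :
  S q -> ptcl Iset Jset Obj L nu S q.
Proof.
  intros HS. unfold ptcl.
  pose proof (pt_adh _ _ _ _ _ q) as [Hmon _].
  pose proof (proj2 (proj2 (proj2_sig q))) as Hpt.
  eapply (pt_mono _ _ _ _ _ q); [| exact Hpt].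
  apply Hmon. apply inf_anti. intros l Hl. apply (Hl _ HS).
Qed.

Lemma ptcl_empty Iset Jset Obj (Hadm : admissible Iset Jset Obj) (L : coframe) (nu : L -> L) q :
  ~ ptcl Iset Jset Obj L nu (fun _ => False) q.
Proof.
  unfold ptcl. intros H.
  pose proof (pt_adh _ _ _ _ _ q) as [Hmon [Hbot _]].
  apply (pt_bot _ _ _ Hadm _ _ q). rewrite <- Hbot.
  eapply pt_mono; [| exact H]. apply Hmon. apply inf_lb. intros _ [].
Qed.

Lemma ptcl_union Iset Jset Obj (Hadm : admissible Iset Jset Obj) (L : coframe) (nu : L -> L)
  (A B : ptT Iset Jset Obj L nu -> Prop) q :
  ptcl Iset Jset Obj L nu (fun y => A y \/ B y) q <->
  ptcl Iset Jset Obj L nu A q \/ ptcl Iset Jset Obj L nu B q.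
Proof.
  unfold ptcl.
  pose proof (pt_adh _ _ _ _ _ q) as Had.
  pose proof Had as [Hmon _].
  split.
  - intros H. apply (pt_join _ _ _ Hadm).
    rewrite <- (nu_join L nu Had).
    eapply pt_mono; [| exact H]. apply Hmon. apply inf_lb.
    intros q' [Hq | Hq].
    + eapply pt_mono; [apply join_l|]. apply (pt_inf _ _ _ Hadm). intros l Hl. apply Hl, Hq.
    + eapply pt_mono; [apply join_r|]. apply (pt_inf _ _ _ Hadm). intros l Hl. apply Hl, Hq.
  - intros [H | H]; (eapply pt_mono; [| exact H]); apply Hmon; apply inf_anti;
    intros l Hl q' Hq'; apply Hl; auto.
Qed.

Definition ptS Iset Jset Obj (Hadm : admissible Iset Jset Obj) (L : coframe) (nu : L -> L)
  : adh_space :=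
  @AdhSpace (ptT Iset Jset Obj L nu) (ptcl Iset Jset Obj L nu)
    (ptcl_ext Iset Jset Obj L nu) (ptcl_empty Iset Jset Obj Hadm L nu)
    (ptcl_union Iset Jset Obj Hadm L nu).

Definition eC Iset Jset Obj (Hadm : admissible Iset Jset Obj) (L : coframe) (nu : L -> L)
  (l : L) : powerset (pts (ptS Iset Jset Obj Hadm L nu)) :=
  fun q => proj1_sig q l tt.

Lemma eC_mor Iset Jset Obj (Hadm : admissible Iset Jset Obj) (L : coframe) (nu : L -> L) :
  @Cadh_mor Iset Jset L nu (powerset (pts (ptS Iset Jset Obj Hadm L nu)))
     (cl (ptS Iset Jset Obj Hadm L nu)) (eC Iset Jset Obj Hadm L nu).
Proof.
  split; [split; [| split] |].
  - intros l m H q. unfold eC. apply pt_mono, H.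
  - intros I HI f. rewrite pow_infF. pext. unfold eC.
    destruct (proj1 (proj2 (proj2_sig x))) as [_ [Hi _]].
    rewrite (Hi I HI f), pow_infF. reflexivity.
  - intros J HJ f. rewrite pow_supF. pext. unfold eC.
    destruct (proj1 (proj2 (proj2_sig x))) as [_ [_ Hs]].
    rewrite (Hs J HJ f), pow_supF. reflexivity.
  - intros S q H. exact H.
Qed.

Lemma gpt_ok Iset Jset Obj (L : coframe) (nu : L -> L) (X : adh_space)
  (phi : L -> powerset (pts X)) (Hobj : adhC_obj Obj L nu)
  (Hphi : @Cadh_mor Iset Jset L nu (powerset (pts X)) (cl X) phi) (x : pts X) :
  is_pt Iset Jset Obj L nu (fun l _ => phi l x).
Proof.
  destruct Hphi as [[Hm [Hi Hs]] Ha].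
  pose proof Hobj as [_ [Hmon _]].
  split; [exact Hobj | split; [split; [| split] |]].
  - intros l m H u. apply (Hm _ _ H).
  - intros I HI f. rewrite pow_infF. pext. rewrite (Hi I HI f), pow_infF. reflexivity.
  - intros J HJ f. rewrite pow_supF. pext. rewrite (Hs J HJ f), pow_supF. reflexivity.
  - pose proof (Ha (fun y => y = x) x (cl_extensive X _ x eq_refl)) as H.
    eapply Hm; [| exact H]. apply Hmon. apply inf_anti.
    intros l Hl y ->. exact Hl.
Qed.

Definition gpt Iset Jset Obj (L : coframe) (nu : L -> L) (X : adh_space)
  (phi : L -> powerset (pts X)) (Hobj : adhC_obj Obj L nu)
  (Hphi : @Cadh_mor Iset Jset L nu (powerset (pts X)) (cl X) phi) (x : pts X)
  : ptT Iset Jset Obj L nu :=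
  exist _ (fun l _ => phi l x) (gpt_ok Iset Jset Obj L nu X phi Hobj Hphi x).

Lemma gpt_mor Iset Jset Obj (Hadm : admissible Iset Jset Obj) (L : coframe) (nu : L -> L)
  (X : adh_space) (phi : L -> powerset (pts X)) (Hobj : adhC_obj Obj L nu)
  (Hphi : @Cadh_mor Iset Jset L nu (powerset (pts X)) (cl X) phi) :
  adh_mor X (ptS Iset Jset Obj Hadm L nu) (gpt Iset Jset Obj L nu X phi Hobj Hphi).
Proof.
  intros A x H. pose proof Hphi as [[Hm _] Ha].
  pose proof Hobj as [_ [Hmon _]].
  simpl. unfold ptcl. simpl.
  eapply Hm; [| exact (Ha A x H)]. apply Hmon. apply inf_anti.
  intros l Hl y Hy. apply (Hl (gpt Iset Jset Obj L nu X phi Hobj Hphi y)).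
  exists y. split; auto.
Qed.

Lemma cl_mono (X : adh_space) (A B : pts X -> Prop) x :
  (forall y, A y -> B y) -> cl X A x -> cl X B x.
Proof.
  intros H HA. assert (E : B = fun y => A y \/ B y).
  { pext. split; auto. intros [H1|H1]; auto. }
  rewrite E. apply cl_union. auto.
Qed.

Lemma adh_pow (X : adh_space) : adherence_structure (powerset (pts X)) (cl X).
Proof.
  split; [| split; [| split]].
  - intros A B H x. apply cl_mono, H.
  - rewrite pow_bot. pext. split; [apply cl_empty | intros []].
  - intros a b _ _. rewrite !pow_join. pext. apply cl_union.
  - intros l. apply le_antisym.
    + apply inf_glb. intros y [a [_ [Hla ->]]]. intros x. apply cl_mono, Hla.
    + apply inf_lb. exists l. split; [| split; [apply le_refl | reflexivity]].
      exists (fun z => ~ l z). rewrite pow_meet, pow_bot, pow_join, pow_top.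
      split; pext; split; try tauto; intros _; apply classic.
Qed.

Lemma id_mor Iset Jset (X : adh_space) :
  @Cadh_mor Iset Jset (powerset (pts X)) (cl X) (powerset (pts X)) (cl X) (fun A => A).
Proof.
  split; [split; [| split] |].
  - intros l m H. exact H.
  - reflexivity.
  - reflexivity.
  - intros l' x H. eapply cl_mono; [| exact H]. intros y Hy. simpl. intros A HA. apply HA, Hy.
Qed.

Lemma point_char Iset Jset Obj (Hadm : admissible Iset Jset Obj) (X : adh_space)
  (q : ptT Iset Jset Obj (powerset (pts X)) (cl X)) :
  exists x, forall A, proj1_sig q A tt <-> A x.
Proof.
  set (m := (fun z => forall A : powerset (pts X), proj1_sig q A tt -> A z) : powerset (pts X)).
  assert (Hm : proj1_sig q m tt).
  { change (proj1_sig q (inf (fun A => proj1_sig q A tt)) tt).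
    apply (pt_inf _ _ _ Hadm). auto. }
  destruct (classic (exists x, m x)) as [[x0 Hx0] | Hn].
  2:{ exfalso. apply (pt_bot _ _ _ Hadm _ _ q). eapply pt_mono; [| exact Hm].
      intros z Hz. exfalso. apply Hn. exists z. exact Hz. }
  set (a := (fun z => z = x0) : powerset (pts X)).
  set (b := (fun z => m z /\ z <> x0) : powerset (pts X)).
  assert (H1 : proj1_sig q a tt).
  { assert (Hj : proj1_sig q (join a b) tt).
    { eapply pt_mono; [| exact Hm]. rewrite pow_le, pow_join. intros z Hz.
      unfold a, b. destruct (classic (z = x0)); auto. }
    apply (pt_join _ _ _ Hadm) in Hj. destruct Hj as [Hj | Hj]; auto.
    exfalso. destruct (Hx0 _ Hj) as [_ Hne]. auto. }
  exists x0. intros A. split.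
  - intros HA. apply (Hx0 _ HA).
  - intros HA. eapply pt_mono; [| exact H1]. intros z Hz. unfold a in Hz. subst z. exact HA.
Qed.

Lemma pt_eq Iset Jset Obj (L : coframe) (nu : L -> L) (q1 q2 : ptT Iset Jset Obj L nu) :
  proj1_sig q1 = proj1_sig q2 -> q1 = q2.
Proof.
  destruct q1 as [p1 h1], q2 as [p2 h2]. simpl. intros ->.
  f_equal. apply proof_irrelevance.
Qed.

Theorem mainTheorem11 (Iset Jset : Type -> Prop) (Obj : coframe -> Prop)
  (Hadm : admissible Iset Jset Obj) :
  exists (pt : forall L : coframe, (L -> L) -> adh_space)
         (e : forall (L : coframe) (nu : L -> L), L -> powerset (pts (pt L nu))),
    (* the counit is a C^adh-morphism *)
    (forall (L : coframe) (nu : L -> L), adhC_obj Obj L nu ->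
       @Cadh_mor Iset Jset L nu (powerset (pts (pt L nu))) (cl (pt L nu)) (e L nu)) /\
    (* universal property: Hom_{(C^adh)^op}(P X, L) ~ Hom_Adh(X, pt L) *)
    (forall (L : coframe) (nu : L -> L), adhC_obj Obj L nu ->
     forall (X : adh_space) (phi : L -> powerset (pts X)),
       @Cadh_mor Iset Jset L nu (powerset (pts X)) (cl X) phi ->
       (exists g : pts X -> pts (pt L nu),
           adh_mor X (pt L nu) g /\
           forall l, phi l = preimage g (e L nu l)) /\
       (forall g1 g2 : pts X -> pts (pt L nu),
           adh_mor X (pt L nu) g1 -> adh_mor X (pt L nu) g2 ->
           (forall l, phi l = preimage g1 (e L nu l)) ->
           (forall l, phi l = preimage g2 (e L nu l)) ->
           forall x, g1 x = g2 x)) /\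
    (* the unit is an isomorphism *)
    (forall X : adh_space,
       exists eta : pts X -> pts (pt (powerset (pts X)) (cl X)),
         adh_mor X _ eta /\
         (forall A : powerset (pts X),
             A = preimage eta (e (powerset (pts X)) (cl X) A)) /\
         adh_iso X _ eta).
Proof.
  exists (ptS Iset Jset Obj Hadm), (eC Iset Jset Obj Hadm).
  split; [| split].
  - intros L nu _. apply eC_mor.
  - intros L nu Hobj X phi Hphi. split.
    + exists (gpt Iset Jset Obj L nu X phi Hobj Hphi). split.
      * apply gpt_mor.
      * intros l. reflexivity.
    + intros g1 g2 _ _ H1 H2 x.
      assert (E : proj1_sig (g1 x) = proj1_sig (g2 x)).
      { apply functional_extensionality. intros l.
        apply functional_extensionality. intros [].
        pose proof (equal_f (H1 l) x) as E1. pose proof (equal_f (H2 l) x) as E2.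
        unfold preimage, eC in E1, E2. rewrite <- E1, <- E2. reflexivity. }
      apply pt_eq, E.
  - intros X.
    assert (Hobj : adhC_obj Obj (powerset (pts X)) (cl X)).
    { split; [apply (proj1 Hadm) | apply adh_pow]. }
    set (eta := gpt Iset Jset Obj (powerset (pts X)) (cl X) X (fun A => A) Hobj (id_mor Iset Jset X)).
    assert (Heta : adh_mor X (ptS Iset Jset Obj Hadm (powerset (pts X)) (cl X)) eta)
      by apply gpt_mor.
    exists eta. split; [exact Heta | split; [intros A; reflexivity |]].
    split; [exact Heta |].
    set (ginv := fun q => proj1_sig (constructive_indefinite_description _
                                      (point_char Iset Jset Obj Hadm X q))).
    assert (Hg : forall q A, proj1_sig q A tt <-> A (ginv q)).
    { intros q. unfold ginv.
      destruct (constructive_indefinite_description _ _) as [x Hx]. exact Hx. }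
    exists ginv. split; [| split].
    + intros S q H. simpl in H. unfold ptcl in H. apply Hg in H.
      eapply cl_mono; [| exact H]. intros z Hz. apply Hz.
      intros q' Hq'. apply Hg. exists q'. auto.
    + intros x. pose proof (proj1 (Hg (eta x) (fun z => z = x)) eq_refl) as H.
      exact H.
    + intros q.
      assert (E : proj1_sig (eta (ginv q)) = proj1_sig q).
      { apply functional_extensionality. intros A.
        apply functional_extensionality. intros [].
        apply propositional_extensionality. simpl. rewrite Hg. tauto. }
      apply pt_eq, E.
Qed.
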